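(* Let $(X,\|\cdot\|_X)\subset(Y,\|\cdot\|_Y)$ be normed spaces, $a\ge0$, $m\in\mathbb N_*$, $\theta>0$, and set $\gamma=\frac{\theta}{2m+\theta}$, $b=\frac{2ma}{2m+\theta}$. Then $S_{\theta,m,a}(X,Y)=K_{\gamma,b}(X,Y)$, and there is a constant $C$ (depending only on $\theta,m,a$) such that for every $y\in Y$, $$\frac1C\rho^{X,Y}_{\theta,m,a}(y)\le|y|_{\gamma,b}\le C\big(\|y\|_Y+\rho^{X,Y}_{\theta,m,a}(y)\big).$$
   Context: $K(y,t)=\inf_{x\in X}(\|y-x\|_Y+t\|x\|_X)$; $|y|_{\gamma,b}=\int_0^1t^{-\gamma}|\ln t|^bK(y,t)\frac{dt}t$; $K_{\gamma,b}(X,Y)=\{y\in Y:|y|_{\gamma,b}<\infty\}$. For a sequence $(x_n)_{n\ge1}\subset X$, $\pi_{\theta,m,a}(y,(x_n)_n)=\sum_{n\ge1}\big(2^{n\theta}n^a\|y-x_n\|_Y+2^{-2nm}\|x_n\|_X\big)$; $\rho^{X,Y}_{\theta,m,a}(y)=\inf_{(x_n)\subset X}\pi_{\theta,m,a}(y,(x_n)_n)$; $S_{\theta,m,a}(X,Y)=\{y\in Y:\rho^{X,Y}_{\theta,m,a}(y)<\infty\}$. *)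

(* Defs.v *)
From Stdlib Require Import Reals Classical ClassicalEpsilon.
Open Scope R_scope.

Inductive ER : Type := Fin (r : R) | PInf.

Definition ER_le (x y : ER) : Prop :=
  match x, y with
  | _, PInf => True
  | PInf, Fin _ => False
  | Fin a, Fin b => a <= b
  end.

Definition ER_plus (x y : ER) : ER :=
  match x, y with
  | Fin a, Fin b => Fin (a + b)
  | _, _ => PInf
  end.

Definition ER_scal (c : R) (x : ER) : ER :=
  match x with Fin a => Fin (c * a) | PInf => PInf end.

(** Supremum of a set of reals (junk value 0 if empty / unbounded). *)
Definition Rsup (E : R -> Prop) : R :=
  match excluded_middle_informative (bound E /\ exists x, E x) with
  | left H => proj1_sig (completeness E (proj1 H) (proj2 H))
  | right _ => 0
  end.

(** Infimum of a set of reals (used only for sets bounded below). *)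
Definition Rinf (E : R -> Prop) : R := - Rsup (fun r => E (- r)).

Definition ER_sup (E : R -> Prop) : ER :=
  match excluded_middle_informative (bound E) with
  | left _ => Fin (Rsup E)
  | right _ => PInf
  end.

Definition ER_inf (E : ER -> Prop) : ER :=
  match excluded_middle_informative (exists r, E (Fin r)) with
  | left _ => Fin (Rinf (fun r => E (Fin r)))
  | right _ => PInf
  end.

Definition series_val (u : nat -> R) : ER :=
  ER_sup (fun s => exists N : nat, s = sum_f_R0 (fun k => u (S k)) N).

(** * A pair of normed spaces X ⊂ Y over R.
    Y is a real normed vector space; X is a linear subspace of Y
    (membership [Xmem]) carrying its own norm [Xnorm]. *)
Record NormedPair : Type := {
  Ycar : Type;
  Yzero : Ycar;
  Yadd : Ycar -> Ycar -> Ycar;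
  Yopp : Ycar -> Ycar;
  Yscal : R -> Ycar -> Ycar;
  Ynorm : Ycar -> R;
  Xmem : Ycar -> Prop;
  Xnorm : Ycar -> R;
  Yadd_assoc : forall u v w, Yadd u (Yadd v w) = Yadd (Yadd u v) w;
  Yadd_comm : forall u v, Yadd u v = Yadd v u;
  Yadd_0 : forall u, Yadd Yzero u = u;
  Yadd_opp : forall u, Yadd (Yopp u) u = Yzero;
  Yscal_assoc : forall a b u, Yscal a (Yscal b u) = Yscal (a * b) u;
  Yscal_1 : forall u, Yscal 1 u = u;
  Yscal_distr_v : forall a u v, Yscal a (Yadd u v) = Yadd (Yscal a u) (Yscal a v);
  Yscal_distr_s : forall a b u, Yscal (a + b) u = Yadd (Yscal a u) (Yscal b u);
  Ynorm_nonneg : forall u, 0 <= Ynorm u;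
  Ynorm_eq0 : forall u, Ynorm u = 0 -> u = Yzero;
  Ynorm_scal : forall a u, Ynorm (Yscal a u) = Rabs a * Ynorm u;
  Ynorm_triangle : forall u v, Ynorm (Yadd u v) <= Ynorm u + Ynorm v;
  Xmem_0 : Xmem Yzero;
  Xmem_add : forall u v, Xmem u -> Xmem v -> Xmem (Yadd u v);
  Xmem_scal : forall a u, Xmem u -> Xmem (Yscal a u);
  Xnorm_nonneg : forall u, Xmem u -> 0 <= Xnorm u;
  Xnorm_eq0 : forall u, Xmem u -> Xnorm u = 0 -> u = Yzero;
  Xnorm_scal : forall a u, Xmem u -> Xnorm (Yscal a u) = Rabs a * Xnorm u;
  Xnorm_triangle : forall u v, Xmem u -> Xmem v ->
      Xnorm (Yadd u v) <= Xnorm u + Xnorm v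
}.

Definition Ysub (P : NormedPair) (u v : Ycar P) : Ycar P :=
  Yadd P u (Yopp P v).

Definition Kfun (P : NormedPair) (y : Ycar P) (t : R) : R :=
  Rinf (fun r => exists x, Xmem P x /\
          r = Ynorm P (Ysub P y x) + t * Xnorm P x).

Definition Kintegrand (P : NormedPair) (gamma b : R) (y : Ycar P) (t : R) : R :=
  Rpower t (- gamma) * Rpower (Rabs (ln t)) b * Kfun P y t / t.

(** |y|_{gamma,b} = int_0^1 t^{-gamma} |ln t|^b K(y,t) dt/t  (in [0,+oo]),
    as an improper Riemann integral of a nonnegative function: the
    supremum of its integrals over compact subintervals [u,v] of (0,1). *)
Definition Knorm (P : NormedPair) (gamma b : R) (y : Ycar P) : ER :=
  ER_sup (fun r => exists (u v : R)
            (pr : Riemann_integrable (Kintegrand P gamma b y) u v),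
            0 < u /\ u <= v /\ v < 1 /\ r = RiemannInt pr).

Definition Kspace (P : NormedPair) (gamma b : R) (y : Ycar P) : Prop :=
  Knorm P gamma b y <> PInf.

Definition pi_term (P : NormedPair) (theta : R) (m : nat) (a : R)
  (y : Ycar P) (x : nat -> Ycar P) (n : nat) : R :=
  Rpower 2 (INR n * theta) * Rpower (INR n) a * Ynorm P (Ysub P y (x n))
  + Rpower 2 (- (2 * INR n * INR m)) * Xnorm P (x n).

Definition pi_val (P : NormedPair) (theta : R) (m : nat) (a : R)
  (y : Ycar P) (x : nat -> Ycar P) : ER :=
  series_val (pi_term P theta m a y x).

Definition rho (P : NormedPair) (theta : R) (m : nat) (a : R) (y : Ycar P) : ER :=
  ER_inf (fun v => exists x : nat -> Ycar P,
            (forall n, (1 <= n)%nat -> Xmem P (x n)) /\ v = pi_val P theta m a y x).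

Definition Sspace (P : NormedPair) (theta : R) (m : nat) (a : R) (y : Ycar P) : Prop :=
  rho P theta m a y <> PInf.

(* Main.v *)
Require Import Defs.
From Stdlib Require Import Reals Lra Lia Classical ClassicalEpsilon.
Open Scope R_scope.

Lemma exp_le x y : x <= y -> exp x <= exp y.
Proof. intros [H|H]; [left; apply exp_increasing; auto| subst; lra]. Qed.

Lemma exp_le_inv x y : exp x <= exp y -> x <= y.
Proof. intros H. destruct (Rle_or_lt x y) as [h|h]; auto.
  apply exp_increasing in h; lra. Qed.

Lemma ln_le x y : 0 < x -> x <= y -> ln x <= ln y.
Proof. intros Hx [H|H]; [left; apply ln_increasing; auto| subst; lra]. Qed.

Lemma ln_le_id x : 0 < x -> ln x <= x - 1.
Proof. intros Hx. pose proof (exp_ineq1_le (ln x)). rewrite exp_ln in H; lra. Qed.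

Lemma Rsup_ub (E : R -> Prop) x : bound E -> E x -> x <= Rsup E.
Proof.
  intros Hb Hx. unfold Rsup.
  destruct (excluded_middle_informative _) as [H|H].
  - destruct (completeness E (proj1 H) (proj2 H)) as [s [Hs1 Hs2]]; simpl. apply Hs1; auto.
  - exfalso; apply H; split; eauto.
Qed.

Lemma Rsup_lub (E : R -> Prop) M : (exists x, E x) -> (forall x, E x -> x <= M) -> Rsup E <= M.
Proof.
  intros Hne Hb. unfold Rsup.
  destruct (excluded_middle_informative _) as [H|H].
  - destruct (completeness E (proj1 H) (proj2 H)) as [s [Hs1 Hs2]]; simpl. apply Hs2. intros x Hx; auto.
  - exfalso; apply H; split; auto. exists M; intros x Hx; auto.
Qed.

Lemma Rinf_lb (E : R -> Prop) x : (forall z, E z -> 0 <= z) -> E x -> Rinf E <= x.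
Proof.
  intros H0 Hx. unfold Rinf.
  assert (- x <= Rsup (fun r => E (- r))).
  { apply Rsup_ub. exists 0. intros z Hz. apply H0 in Hz. lra. now rewrite Ropp_involutive. }
  lra.
Qed.

Lemma Rinf_glb (E : R -> Prop) M : (exists x, E x) -> (forall x, E x -> M <= x) -> M <= Rinf E.
Proof.
  intros [x Hx] Hb. unfold Rinf.
  assert (Rsup (fun r => E (- r)) <= - M).
  { apply Rsup_lub. exists (- x). now rewrite Ropp_involutive. intros z Hz. apply Hb in Hz. lra. }
  lra.
Qed.

Section KF.
Context (P : NormedPair) (y : Ycar P).

Lemma Yopp0 : Yopp P (Yzero P) = Yzero P.
Proof.
  pose proof (Yadd_opp P (Yzero P)) as H. rewrite Yadd_comm, Yadd_0 in H. exact H.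
Qed.

Lemma Yscal_zero c : Yscal P c (Yzero P) = Yzero P.
Proof.
  set (w := Yscal P c (Yzero P)).
  assert (Hw : Yadd P w w = w).
  { unfold w. rewrite <- Yscal_distr_v, Yadd_0. reflexivity. }
  assert (Yadd P (Yopp P w) (Yadd P w w) = Yadd P (Yopp P w) w) by now rewrite Hw.
  rewrite Yadd_assoc, Yadd_opp, Yadd_0 in H. exact H.
Qed.

Lemma Xnorm0 : Xnorm P (Yzero P) = 0.
Proof.
  rewrite <- (Yscal_zero 0). rewrite Xnorm_scal by apply Xmem_0. rewrite Rabs_R0. ring.
Qed.

Lemma Ysub0 : Ysub P y (Yzero P) = y.
Proof. unfold Ysub. rewrite Yopp0, Yadd_comm, Yadd_0. reflexivity. Qed.

Definition Kset t r := exists x, Xmem P x /\ r = Ynorm P (Ysub P y x) + t * Xnorm P x.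

Lemma Kset_pos t : 0 <= t -> forall z, Kset t z -> 0 <= z.
Proof.
  intros Ht z [x [Hx ->]]. pose proof (Ynorm_nonneg P (Ysub P y x)).
  pose proof (Xnorm_nonneg P x Hx). nra.
Qed.

Lemma Kset_ne t : exists z, Kset t z.
Proof. eexists. exists (Yzero P). split. apply Xmem_0. reflexivity. Qed.

Lemma K_le t x : 0 <= t -> Xmem P x -> Kfun P y t <= Ynorm P (Ysub P y x) + t * Xnorm P x.
Proof.
  intros Ht Hx. apply Rinf_lb. apply Kset_pos; auto. exists x; auto.
Qed.

Lemma K_ge0 t : 0 <= t -> 0 <= Kfun P y t.
Proof.
  intros Ht. apply Rinf_glb. apply Kset_ne. apply Kset_pos; auto.
Qed.

Lemma K_le_norm t : 0 <= t -> Kfun P y t <= Ynorm P y.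
Proof.
  intros Ht. pose proof (K_le t (Yzero P) Ht (Xmem_0 P)). rewrite Ysub0, Xnorm0 in H. lra.
Qed.

Lemma K_approx t eps : 0 <= t -> 0 < eps -> exists x, Xmem P x /\
   Ynorm P (Ysub P y x) + t * Xnorm P x <= Kfun P y t + eps.
Proof.
  intros Ht He. apply NNPP. intros Hn.
  assert (Kfun P y t + eps <= Kfun P y t).
  { apply Rinf_glb. apply Kset_ne. intros z [x [Hx ->]].
    destruct (Rle_or_lt (Ynorm P (Ysub P y x) + t * Xnorm P x) (Kfun P y t + eps)) as [h|h].
    - exfalso; apply Hn; exists x; auto.
    - lra. }
  lra.
Qed.

Lemma K_mono s t : 0 <= s -> s <= t -> Kfun P y s <= Kfun P y t.
Proof.
  intros Hs Hst. apply Rinf_glb. apply Kset_ne. intros z [x [Hx ->]].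
  pose proof (K_le s x Hs Hx). pose proof (Xnorm_nonneg P x Hx). nra.
Qed.

Lemma K_ratio s t : 0 < s -> s <= t -> Kfun P y t <= (t / s) * Kfun P y s.
Proof.
  intros Hs Hst.
  assert (s / t * Kfun P y t <= Kfun P y s).
  { apply Rinf_glb. apply Kset_ne. intros z [x [Hx ->]].
    pose proof (K_le t x ltac:(lra) Hx). pose proof (Xnorm_nonneg P x Hx).
    pose proof (Ynorm_nonneg P (Ysub P y x)).
    assert (0 < s / t <= 1). { split. apply Rdiv_lt_0_compat; lra.
      apply Rmult_le_reg_r with t; [lra|]. field_simplify; lra. }
    assert (s / t * t = s) by (field; lra).
    apply Rle_trans with (s / t * (Ynorm P (Ysub P y x) + t * Xnorm P x)).
    apply Rmult_le_compat_l; lra. nra. }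
  assert (Kfun P y t = (t / s) * (s / t * Kfun P y t)) by (field; lra).
  rewrite H0. apply Rmult_le_compat_l; auto. left; apply Rdiv_lt_0_compat; lra.
Qed.

Lemma K_cont t0 : 0 < t0 -> continuity_pt (Kfun P y) t0.
Proof.
  intros Ht0. unfold continuity_pt, continue_in, limit1_in, limit_in. simpl.
  intros eps He. set (K0 := Kfun P y t0).
  assert (HK0 : 0 <= K0) by (apply K_ge0; lra).
  exists (Rmin (t0 / 2) (eps * t0 / (2 * K0 + 1))). split.
  { apply Rmin_pos. lra. apply Rdiv_lt_0_compat; nra. }
  intros t [_ Hd]. unfold R_dist in *.
  assert (Hd1 : Rabs (t - t0) < t0 / 2) by (eapply Rlt_le_trans; [exact Hd| apply Rmin_l]).
  assert (Hd2 : Rabs (t - t0) < eps * t0 / (2 * K0 + 1)) by (eapply Rlt_le_trans; [exact Hd| apply Rmin_r]).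
  assert (Hb : Rabs (Kfun P y t - K0) <= Rabs (t - t0) * (2 * K0 / t0)).
  { apply Rabs_def2 in Hd1 as [Ha Hb'].
    destruct (Rle_or_lt t0 t) as [h|h].
    - pose proof (K_mono t0 t ltac:(lra) h) as Q1. pose proof (K_ratio t0 t Ht0 h) as Q2. fold K0 in Q1, Q2.
      rewrite Rabs_right by lra. rewrite (Rabs_right (t - t0)) by lra.
      assert ((t / t0) * K0 - K0 = (t - t0) * (K0 / t0)) by (field; lra).
      assert ((t - t0) * (K0 / t0) <= (t - t0) * (2 * K0 / t0)).
      { apply Rmult_le_compat_l; [lra|]. unfold Rdiv. apply Rmult_le_compat_r.
        left; apply Rinv_0_lt_compat; lra. lra. }
      lra.
    - assert (0 < t) by lra.
      pose proof (K_mono t t0 ltac:(lra) ltac:(lra)) as Q1. pose proof (K_ratio t t0 H ltac:(lra)) as Q2.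
      pose proof (K_ge0 t ltac:(lra)) as Q3.
      fold K0 in Q1, Q2.
      rewrite Rabs_left1 by lra. rewrite (Rabs_left1 (t - t0)) by lra.
      assert (K0 - Kfun P y t <= (t0 / t - 1) * Kfun P y t).
      { assert ((t0/t) * Kfun P y t = Kfun P y t + (t0 / t - 1) * Kfun P y t) by ring. lra. }
      assert (E1 : t0 / t - 1 = (t0 - t) / t) by (field; lra).
      assert ((t0 - t) / t <= (t0 - t) * (2 / t0)).
      { unfold Rdiv. apply Rmult_le_compat_l; [lra|].
        apply Rmult_le_reg_l with t; [lra|]. rewrite Rinv_r by lra.
        apply Rmult_le_reg_r with t0; [lra|]. field_simplify; lra. }
      assert (0 <= (t0 - t) / t) by (unfold Rdiv; apply Rmult_le_pos; [lra| left; apply Rinv_0_lt_compat; lra]).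
      assert ((t0 / t - 1) * Kfun P y t <= (t0 - t) * (2 / t0) * K0).
      { rewrite E1. apply Rle_trans with ((t0 - t) / t * K0). apply Rmult_le_compat_l; lra.
        apply Rmult_le_compat_r; lra. }
      replace (- (t - t0) * (2 * K0 / t0)) with ((t0 - t) * (2 / t0) * K0) by (field; lra).
      lra. }
  apply Rle_lt_trans with (1 := Hb).
  destruct (Req_dec K0 0) as [Hz|Hz].
  - rewrite Hz. replace (Rabs (t - t0) * (2 * 0 / t0)) with 0 by (field; lra). lra.
  - apply Rlt_le_trans with (eps * t0 / (2 * K0 + 1) * (2 * K0 / t0)).
    apply Rmult_lt_compat_r; auto. apply Rdiv_lt_0_compat; lra.
    replace (eps * t0 / (2 * K0 + 1) * (2 * K0 / t0)) with (eps * (2 * K0 / (2 * K0 + 1))) by (field; lra).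
    rewrite <- (Rmult_1_r eps) at 2. apply Rmult_le_compat_l; [lra|].
    apply Rmult_le_reg_r with (2*K0+1); [lra|]. field_simplify; lra.
Qed.

End KF.

Lemma int_le_const f u v (pr : Riemann_integrable f u v) M : u <= v ->
  (forall t, u < t < v -> f t <= M) -> RiemannInt pr <= M * (v - u).
Proof.
  intros Huv H. rewrite <- (RiemannInt_P15 (RiemannInt_P14 u v M)).
  apply RiemannInt_P19; auto.
Qed.

Lemma int_ge_const f u v (pr : Riemann_integrable f u v) M : u <= v ->
  (forall t, u < t < v -> M <= f t) -> M * (v - u) <= RiemannInt pr.
Proof.
  intros Huv H. rewrite <- (RiemannInt_P15 (RiemannInt_P14 u v M)).
  apply RiemannInt_P19; auto.
Qed.

Fixpoint psum (u : nat -> R) (N : nat) : R :=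
  match N with O => 0 | S k => psum u k + u (S k) end.

Lemma psum_eq u N : psum u (S N) = sum_f_R0 (fun k => u (S k)) N.
Proof. induction N. simpl. ring. change (psum u (S (S N))) with (psum u (S N) + u (S (S N))).
  rewrite IHN. simpl. reflexivity. Qed.

Lemma psum_ge0 u N : (forall n, (1 <= n)%nat -> 0 <= u n) -> 0 <= psum u N.
Proof. intros H. induction N; simpl. lra. pose proof (H (S N) ltac:(lia)). lra. Qed.

Section Par.
Context (theta a : R) (m : nat) (Hth : 0 < theta) (Hm : (1 <= m)%nat) (Ha : 0 <= a).

Definition l2 := ln 2.
Definition LL := 2 * INR m + theta.
Definition gam := theta / LL.
Definition bb := 2 * INR m * a / LL.
Definition tau (n : nat) := exp (- (INR n * LL * l2) - a * ln (INR n)).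
Definition cc := exp (LL * l2 / 2).
Definition Bn (n : nat) := exp (INR n * theta * l2 + a * ln (INR n)).
Definition lnM1 := theta*l2 + LL*l2 + bb*l2 + bb*ln(LL*l2 + a) + 2*a*l2.
Definition lnm1 := - (theta*l2/2) + bb * ln (LL*l2/2) - LL*l2/2.

Lemma l2_pos : 0 < l2.
Proof. unfold l2. pose proof ln_lt_2. lra. Qed.

Lemma INRm1 : 1 <= INR m.
Proof. replace 1 with (INR 1) by reflexivity. apply le_INR; auto. Qed.

Lemma LL_pos : 0 < LL.
Proof. unfold LL. pose proof INRm1. lra. Qed.

Lemma gamLL : gam * LL = theta.
Proof. unfold gam. field. pose proof LL_pos; lra. Qed.

Lemma gam_bounds : 0 <= gam <= 1.
Proof.
  pose proof LL_pos. pose proof INRm1. unfold gam. split.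
  - left; apply Rdiv_lt_0_compat; lra.
  - apply Rmult_le_reg_r with LL; auto. field_simplify; unfold LL; lra.
Qed.

Lemma bb_eq : bb = a - gam * a.
Proof. unfold bb, gam. field_simplify. unfold LL. field. all: pose proof LL_pos; unfold LL in *; lra. Qed.

Lemma bb_ge0 : 0 <= bb.
Proof. rewrite bb_eq. pose proof gam_bounds. nra. Qed.

Lemma ln_INR_ge0 n : (1 <= n)%nat -> 0 <= ln (INR n).
Proof.
  intros Hn. rewrite <- ln_1. apply ln_le. lra. replace 1 with (INR 1) by reflexivity. apply le_INR; auto.
Qed.

Lemma INR_ge1 n : (1 <= n)%nat -> 1 <= INR n.
Proof. intros Hn. replace 1 with (INR 1) by reflexivity. apply le_INR; auto. Qed.

Lemma ln_S_le n : (1 <= n)%nat -> ln (INR (S n)) <= l2 + ln (INR n).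
Proof.
  intros Hn. pose proof (INR_ge1 n Hn). unfold l2. rewrite <- ln_mult by lra.
  apply ln_le. rewrite S_INR; lra. rewrite S_INR; lra.
Qed.

Lemma ln_S_ge n : (1 <= n)%nat -> ln (INR n) <= ln (INR (S n)).
Proof.
  intros Hn. pose proof (INR_ge1 n Hn). apply ln_le. lra. rewrite S_INR; lra.
Qed.

Lemma ln_S_le2 n : (1 <= n)%nat -> ln (INR (S n)) <= INR n.
Proof.
  intros Hn. pose proof (INR_ge1 n Hn). pose proof (ln_le_id (INR (S n))). rewrite S_INR in *. 
  assert (ln (INR n + 1) <= INR n + 1 - 1) by (apply H0; lra). lra.
Qed.

Lemma tau_pos n : 0 < tau n.
Proof. apply exp_pos. Qed.

Lemma ln_tau n : ln (tau n) = - (INR n * LL * l2) - a * ln (INR n).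
Proof. unfold tau. apply ln_exp. Qed.

Lemma tau_lt1 n : (1 <= n)%nat -> tau n < 1.
Proof.
  intros Hn. unfold tau. rewrite <- exp_0. apply exp_increasing.
  pose proof (INR_ge1 n Hn). pose proof (ln_INR_ge0 n Hn). pose proof l2_pos. pose proof LL_pos.
  assert (0 < INR n * LL * l2) by (repeat apply Rmult_lt_0_compat; lra). nra.
Qed.

Lemma cc_ge1 : 1 <= cc.
Proof. unfold cc. rewrite <- exp_0. apply exp_le. pose proof l2_pos; pose proof LL_pos.
  assert (0 < LL * l2) by (apply Rmult_lt_0_compat; lra). lra. Qed.

Lemma cctau n : cc * tau n = exp (LL * l2 / 2 - INR n * LL * l2 - a * ln (INR n)).
Proof. unfold cc, tau. rewrite <- exp_plus. f_equal. ring. Qed.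

Lemma cctau_S n : (1 <= n)%nat -> cc * tau (S n) <= tau n.
Proof.
  intros Hn. rewrite cctau. unfold tau. apply exp_le.
  pose proof (ln_S_ge n Hn). pose proof l2_pos; pose proof LL_pos.
  assert (0 < LL * l2) by (apply Rmult_lt_0_compat; lra).
  assert (a * ln (INR n) <= a * ln (INR (S n))) by (apply Rmult_le_compat_l; lra).
  rewrite S_INR in *. lra.
Qed.

Lemma tau_S_le n : (1 <= n)%nat -> tau (S n) <= tau n.
Proof.
  intros Hn. pose proof (cctau_S n Hn). pose proof cc_ge1. pose proof (tau_pos (S n)). nra.
Qed.

Lemma cctau1 : cc * tau 1 < 1.
Proof.
  rewrite cctau. rewrite <- exp_0. apply exp_increasing. simpl INR. rewrite ln_1.
  pose proof l2_pos; pose proof LL_pos.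
  assert (0 < LL * l2) by (apply Rmult_lt_0_compat; lra). lra.
Qed.

Lemma tau_le1 n : (1 <= n)%nat -> tau n <= tau 1.
Proof.
  induction n; intros Hn. lia. destruct n. lra.
  eapply Rle_trans. apply tau_S_le; lia. apply IHn; lia.
Qed.

Lemma Bn_eq n : Bn n = Rpower 2 (INR n * theta) * Rpower (INR n) a.
Proof. unfold Bn, Rpower, l2. rewrite <- exp_plus. f_equal; ring. Qed.

Lemma Bn_tau n : Bn n * tau n = Rpower 2 (- (2 * INR n * INR m)).
Proof. unfold Bn, tau, Rpower, l2. rewrite <- exp_plus. f_equal. unfold LL, l2. ring. Qed.

Lemma Bn_pos n : 0 < Bn n.
Proof. apply exp_pos. Qed.

Section Fun.
Context (P : NormedPair) (y : Ycar P).

Definition ff := Kintegrand P gam bb y.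

Lemma ff_form t : 0 < t < 1 -> ff t = exp (- gam * ln t) * exp (bb * ln (- ln t)) * Kfun P y t / t.
Proof.
  intros Ht. assert (ln t < 0) by (rewrite <- ln_1; apply ln_increasing; lra).
  unfold ff, Kintegrand, Rpower. rewrite Rabs_left by auto. reflexivity.
Qed.

Lemma ff_ge0 t : 0 < t < 1 -> 0 <= ff t.
Proof.
  intros Ht. rewrite ff_form by auto. pose proof (K_ge0 P y t ltac:(lra)).
  unfold Rdiv. apply Rmult_le_pos. apply Rmult_le_pos; auto.
  left; apply Rmult_lt_0_compat; apply exp_pos.
  left; apply Rinv_0_lt_compat; lra.
Qed.

Lemma ff_cont t : 0 < t < 1 -> continuity_pt ff t.
Proof.
  intros Ht. assert (ln t < 0) by (rewrite <- ln_1; apply ln_increasing; lra).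
  assert (C1 : continuity_pt (fun u => Rpower u (- gam)) t).
  { apply derivable_continuous_pt. exists (- gam * Rpower t (- gam - 1)). apply derivable_pt_lim_power. lra. }
  assert (C2 : continuity_pt (fun u => Rpower (Rabs (ln u)) bb) t).
  { change (continuity_pt (comp (fun u => Rpower u bb) (comp Rabs ln)) t).
    apply continuity_pt_comp.
    - apply continuity_pt_comp. apply derivable_continuous_pt. exists (/ t). apply derivable_pt_lim_ln. lra.
      apply Rcontinuity_abs.
    - apply derivable_continuous_pt. exists (bb * Rpower (Rabs (ln t)) (bb - 1)).
      apply derivable_pt_lim_power. unfold comp. rewrite Rabs_left; lra. }
  assert (C3 : continuity_pt (Kfun P y) t) by (apply K_cont; lra).
  assert (C4 : continuity_pt id t) by (apply derivable_continuous_pt, derivable_pt_id).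
  assert (C : continuity_pt (((fun u => Rpower u (- gam)) * (fun u => Rpower (Rabs (ln u)) bb) * Kfun P y) / id)%F t).
  { apply continuity_pt_div. apply continuity_pt_mult. apply continuity_pt_mult. all: auto.
    unfold id; lra. }
  exact C.
Qed.

Lemma ff_int u v : 0 < u -> u <= v -> v < 1 -> Riemann_integrable ff u v.
Proof.
  intros Hu Huv Hv. apply continuity_implies_RiemannInt; auto. intros t Ht. apply ff_cont; lra.
Qed.


Lemma upper_pt n t : (1 <= n)%nat -> tau (S n) <= t <= tau n ->
  ff t <= exp lnM1 * Bn n * Kfun P y (tau n) / tau n.
Proof.
  intros Hn Ht.
  pose proof (tau_pos (S n)) as Hp. pose proof (tau_lt1 n Hn) as Hl.
  pose proof l2_pos as Hl2. pose proof LL_pos as HL. pose proof gam_bounds as Hg.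
  pose proof bb_ge0 as Hb. pose proof (INR_ge1 n Hn) as Hn1. pose proof (ln_INR_ge0 n Hn) as Hln0.
  pose proof (ln_S_le n Hn) as HS1. pose proof (ln_S_ge n Hn) as HS2. pose proof (ln_S_le2 n Hn) as HS3.
  rewrite ff_form by lra.
  set (A := INR (S n) * LL * l2 + a * ln (INR (S n))).
  assert (HtS : tau (S n) = exp (- A)) by (unfold tau, A; f_equal; ring).
  assert (Hlt0 : ln t < 0) by (rewrite <- ln_1; apply ln_increasing; lra).
  assert (HlA : - ln t <= A).
  { assert (ln (tau (S n)) <= ln t) by (apply ln_le; lra). rewrite HtS, ln_exp in H. lra. }
  assert (HA : A <= INR n * 2 * (LL * l2 + a)).
  { unfold A.
    assert (a * ln (INR (S n)) <= a * INR n) by (apply Rmult_le_compat_l; lra).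
    assert (0 < LL * l2) by (apply Rmult_lt_0_compat; lra).
    assert (0 <= (INR n - 1) * (LL * l2)) by (apply Rmult_le_pos; lra).
    rewrite S_INR in *. nra. }
  assert (Hln : ln (- ln t) <= l2 + ln (INR n) + ln (LL * l2 + a)).
  { assert (0 < LL * l2) by (apply Rmult_lt_0_compat; lra).
    unfold l2 in *. rewrite <- (ln_mult 2 (INR n)) by lra.
    rewrite <- ln_mult by (try apply Rmult_lt_0_compat; lra).
    apply ln_le. lra. lra. }
  assert (E1 : exp (- gam * ln t) <= exp (gam * A)).
  { apply exp_le. nra. }
  assert (E2 : exp (bb * ln (- ln t)) <= exp (bb * (l2 + ln (INR n) + ln (LL * l2 + a)))).
  { apply exp_le. apply Rmult_le_compat_l; lra. }
  assert (E3 : Kfun P y t <= Kfun P y (tau n)) by (apply K_mono; lra).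
  assert (E4 : / t <= exp A).
  { replace (exp A) with (/ tau (S n)). apply Rinv_le_contravar; lra.
    rewrite HtS, exp_Ropp, Rinv_inv. reflexivity. }
  pose proof (K_ge0 P y t ltac:(lra)) as K0.
  apply Rle_trans with (exp (gam * A) * exp (bb * (l2 + ln (INR n) + ln (LL * l2 + a))) * Kfun P y (tau n) * exp A).
  { unfold Rdiv. apply Rmult_le_compat.
    - apply Rmult_le_pos; auto. left; apply Rmult_lt_0_compat; apply exp_pos.
    - left; apply Rinv_0_lt_compat; lra.
    - apply Rmult_le_compat; auto. left; apply Rmult_lt_0_compat; apply exp_pos.
      apply Rmult_le_compat; auto; left; apply exp_pos.
    - auto. }
  assert (Hti : / tau n = exp (INR n * LL * l2 + a * ln (INR n))).
  { unfold tau. rewrite <- exp_Ropp. f_equal. ring. }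
  unfold Rdiv. rewrite Hti. unfold Bn.
  replace (exp (gam * A) * exp (bb * (l2 + ln (INR n) + ln (LL * l2 + a))) * Kfun P y (tau n) * exp A)
    with (exp (gam * A + bb * (l2 + ln (INR n) + ln (LL * l2 + a)) + A) * Kfun P y (tau n))
    by (rewrite !exp_plus; ring).
  replace (exp lnM1 * exp (INR n * theta * l2 + a * ln (INR n)) * Kfun P y (tau n) *
           exp (INR n * LL * l2 + a * ln (INR n)))
    with (exp (lnM1 + (INR n * theta * l2 + a * ln (INR n)) + (INR n * LL * l2 + a * ln (INR n))) * Kfun P y (tau n))
    by (rewrite !exp_plus; ring).
  apply Rmult_le_compat_r. apply K_ge0; left; apply tau_pos.
  apply exp_le. unfold A, lnM1. rewrite bb_eq. rewrite S_INR.
  assert (H3 : gam * ((INR n + 1) * LL * l2) = (INR n + 1) * theta * l2).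
  { rewrite <- gamLL. ring. }
  assert (H4 : 0 <= a * (1 + gam) * (l2 + ln (INR n) - ln (INR n + 1))).
  { rewrite S_INR in HS1. apply Rmult_le_pos; [|lra]. apply Rmult_le_pos; lra. }
  assert (H5 : 0 <= a * (1 - gam) * l2) by (apply Rmult_le_pos; [apply Rmult_le_pos|]; lra).
  nra.
Qed.

Lemma lower_pt n t : (1 <= n)%nat -> tau n <= t <= cc * tau n ->
  exp lnm1 * Bn n * Kfun P y (tau n) / tau n <= ff t.
Proof.
  intros Hn Ht.
  pose proof (tau_pos n) as Hp. pose proof (cctau_S n Hn).
  pose proof l2_pos as Hl2. pose proof LL_pos as HL. pose proof gam_bounds as Hg.
  pose proof bb_ge0 as Hb. pose proof (INR_ge1 n Hn) as Hn1. pose proof (ln_INR_ge0 n Hn) as Hln0.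
  set (A := INR n * LL * l2 + a * ln (INR n) - LL * l2 / 2).
  assert (HcA : cc * tau n = exp (- A)) by (rewrite cctau; unfold A; f_equal; ring).
  assert (HA : INR n * (LL * l2 / 2) <= A).
  { unfold A. assert (0 <= a * ln (INR n)) by (apply Rmult_le_pos; lra).
    assert (0 <= (INR n - 1) * (LL * l2)) by (apply Rmult_le_pos; [lra| left; apply Rmult_lt_0_compat; lra]).
    lra. }
  assert (HLl : 0 < LL * l2) by (apply Rmult_lt_0_compat; lra).
  assert (HA0 : 0 < INR n * (LL * l2 / 2)) by (apply Rmult_lt_0_compat; lra).
  assert (Hc1 : cc * tau n < 1).
  { rewrite HcA. rewrite <- exp_0. apply exp_increasing. lra. }
  rewrite ff_form by lra.
  assert (HlA : A <= - ln t).
  { assert (ln t <= ln (cc * tau n)) by (apply ln_le; lra). rewrite HcA, ln_exp in H0. lra. }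
  assert (Hln : ln (INR n) + ln (LL * l2 / 2) <= ln (- ln t)).
  { rewrite <- ln_mult by (try apply Rmult_lt_0_compat; lra). apply ln_le. lra. lra. }
  assert (E1 : exp (gam * A) <= exp (- gam * ln t)).
  { apply exp_le. nra. }
  assert (E2 : exp (bb * (ln (INR n) + ln (LL * l2 / 2))) <= exp (bb * ln (- ln t))).
  { apply exp_le. apply Rmult_le_compat_l; lra. }
  assert (E3 : Kfun P y (tau n) <= Kfun P y t) by (apply K_mono; lra).
  assert (E4 : exp A <= / t).
  { replace (exp A) with (/ (cc * tau n)). apply Rinv_le_contravar; lra.
    rewrite HcA, exp_Ropp, Rinv_inv. reflexivity. }
  pose proof (K_ge0 P y (tau n) ltac:(lra)) as K0.
  apply Rle_trans with (exp (gam * A) * exp (bb * (ln (INR n) + ln (LL * l2 / 2))) * Kfun P y (tau n) * exp A).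
  2:{ unfold Rdiv. apply Rmult_le_compat.
    - apply Rmult_le_pos; auto. left; apply Rmult_lt_0_compat; apply exp_pos.
    - left; apply exp_pos.
    - apply Rmult_le_compat; auto. left; apply Rmult_lt_0_compat; apply exp_pos.
      apply Rmult_le_compat; auto; left; apply exp_pos.
    - auto. }
  assert (Hti : / tau n = exp (INR n * LL * l2 + a * ln (INR n))).
  { unfold tau. rewrite <- exp_Ropp. f_equal. ring. }
  change (exp lnm1 * Bn n * Kfun P y (tau n) * / tau n <= exp (gam * A) * exp (bb * (ln (INR n) + ln (LL * l2 / 2))) * Kfun P y (tau n) * exp A). rewrite Hti. unfold Bn.
  replace (exp (gam * A) * exp (bb * (ln (INR n) + ln (LL * l2 / 2))) * Kfun P y (tau n) * exp A)
    with (exp (gam * A + bb * (ln (INR n) + ln (LL * l2 / 2)) + A) * Kfun P y (tau n))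
    by (rewrite !exp_plus; ring).
  replace (exp lnm1 * exp (INR n * theta * l2 + a * ln (INR n)) * Kfun P y (tau n) *
           exp (INR n * LL * l2 + a * ln (INR n)))
    with (exp (lnm1 + (INR n * theta * l2 + a * ln (INR n)) + (INR n * LL * l2 + a * ln (INR n))) * Kfun P y (tau n))
    by (rewrite !exp_plus; ring).
  apply Rmult_le_compat_r; auto.
  apply exp_le. unfold A, lnm1. rewrite bb_eq.
  assert (H3 : gam * (INR n * LL * l2) = INR n * theta * l2) by (rewrite <- gamLL; ring).
  assert (H4 : gam * (LL * l2 / 2) = theta * l2 / 2) by (rewrite <- gamLL; field).
  nra.
Qed.

Definition M0 := exp (- gam * ln (tau 1)) * exp (bb * ln (- ln (tau 1))) / tau 1.

Lemma M0_pos : 0 < M0.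
Proof. unfold M0, Rdiv. apply Rmult_lt_0_compat. apply Rmult_lt_0_compat; apply exp_pos.
  apply Rinv_0_lt_compat, tau_pos. Qed.

Lemma top_pt t : tau 1 <= t < 1 -> ff t <= M0 * Ynorm P y.
Proof.
  intros Ht. pose proof (tau_pos 1). pose proof (tau_lt1 1 (le_n 1)).
  pose proof gam_bounds as Hg. pose proof bb_ge0 as Hb.
  rewrite ff_form by lra.
  assert (Hlt0 : ln t < 0) by (rewrite <- ln_1; apply ln_increasing; lra).
  assert (Hl : ln (tau 1) <= ln t) by (apply ln_le; lra).
  assert (E1 : exp (- gam * ln t) <= exp (- gam * ln (tau 1))) by (apply exp_le; nra).
  assert (E2 : exp (bb * ln (- ln t)) <= exp (bb * ln (- ln (tau 1)))).
  { apply exp_le. apply Rmult_le_compat_l; auto. apply ln_le; lra. }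
  assert (E3 : Kfun P y t <= Ynorm P y) by (apply K_le_norm; lra).
  assert (E4 : / t <= / tau 1) by (apply Rinv_le_contravar; lra).
  pose proof (K_ge0 P y t ltac:(lra)) as K0.
  unfold M0, Rdiv.
  replace (exp (- gam * ln (tau 1)) * exp (bb * ln (- ln (tau 1))) * / tau 1 * Ynorm P y)
    with (exp (- gam * ln (tau 1)) * exp (bb * ln (- ln (tau 1))) * Ynorm P y * / tau 1) by ring.
  apply Rmult_le_compat.
    - apply Rmult_le_pos; auto. left; apply Rmult_lt_0_compat; apply exp_pos.
    - left; apply Rinv_0_lt_compat; lra.
    - apply Rmult_le_compat; auto. left; apply Rmult_lt_0_compat; apply exp_pos.
      apply Rmult_le_compat; auto; left; apply exp_pos.
    - auto.
Qed.

Section Seq.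
Context (x : nat -> Ycar P) (Hx : forall n, (1 <= n)%nat -> Xmem P (x n)).

Definition pp := pi_term P theta m a y x.

Lemma pp_ge0 n : (1 <= n)%nat -> 0 <= pp n.
Proof.
  intros Hn. unfold pp, pi_term. pose proof (Ynorm_nonneg P (Ysub P y (x n))).
  pose proof (Xnorm_nonneg P (x n) (Hx n Hn)).
  apply Rplus_le_le_0_compat; apply Rmult_le_pos; auto.
  apply Rmult_le_pos; left; apply exp_pos. left; apply exp_pos.
Qed.

Lemma pp_bound n : (1 <= n)%nat -> Bn n * Kfun P y (tau n) <= pp n.
Proof.
  intros Hn. pose proof (K_le P y (tau n) (x n) (Rlt_le _ _ (tau_pos n)) (Hx n Hn)).
  unfold pp, pi_term. rewrite <- Bn_eq, <- Bn_tau.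
  pose proof (Bn_pos n).
  replace (Bn n * Ynorm P (Ysub P y (x n)) + Bn n * tau n * Xnorm P (x n))
    with (Bn n * (Ynorm P (Ysub P y (x n)) + tau n * Xnorm P (x n))) by ring.
  apply Rmult_le_compat_l; lra.
Qed.

Lemma blockA n u v (pr : Riemann_integrable ff u v) : (1 <= n)%nat ->
  tau (S n) <= u -> u <= v -> v <= tau n -> RiemannInt pr <= exp lnM1 * pp n.
Proof.
  intros Hn H1 H2 H3.
  eapply Rle_trans. apply int_le_const with (M := exp lnM1 * Bn n * Kfun P y (tau n) / tau n); auto.
  intros t Ht. apply upper_pt; auto; lra.
  pose proof (tau_pos n). pose proof (tau_pos (S n)). pose proof (K_ge0 P y (tau n) ltac:(lra)).
  pose proof (Bn_pos n). pose proof (exp_pos lnM1). pose proof (pp_bound n Hn).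
  apply Rle_trans with (exp lnM1 * Bn n * Kfun P y (tau n) / tau n * tau n).
  apply Rmult_le_compat_l. unfold Rdiv. apply Rmult_le_pos. apply Rmult_le_pos; [|lra].
  apply Rmult_le_pos; lra. left; apply Rinv_0_lt_compat; lra. lra.
  replace (exp lnM1 * Bn n * Kfun P y (tau n) / tau n * tau n) with (exp lnM1 * (Bn n * Kfun P y (tau n))) by (field; lra).
  apply Rmult_le_compat_l; lra.
Qed.

Lemma intA N : forall u v (pr : Riemann_integrable ff u v),
  tau (S N) <= u -> u <= v -> v < 1 -> RiemannInt pr <= M0 * Ynorm P y + exp lnM1 * psum pp N.
Proof.
  pose proof M0_pos. pose proof (Ynorm_nonneg P y). pose proof (exp_pos lnM1).
  assert (HM : 0 <= M0 * Ynorm P y) by (apply Rmult_le_pos; lra).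
  induction N; intros u v pr G1 G2 G3.
  - simpl psum. eapply Rle_trans. apply int_le_const with (M := M0 * Ynorm P y); auto.
    intros t Ht. apply top_pt. lra.
    pose proof (tau_pos 1).
    assert (M0 * Ynorm P y * (v - u) <= M0 * Ynorm P y * 1) by (apply Rmult_le_compat_l; lra). lra.
  - pose proof (pp_ge0 (S N) ltac:(lia)). pose proof (psum_ge0 pp N pp_ge0).
    simpl psum.
    destruct (Rle_or_lt (tau (S N)) u) as [h|h].
    + eapply Rle_trans. apply IHN; auto. nra.
    + destruct (Rle_or_lt v (tau (S N))) as [h'|h'].
      * eapply Rle_trans. apply blockA with (n := S N); auto; try lia; try lra. nra.
      * assert (Hw : u <= tau (S N) <= v) by lra.
        pose (pr1 := RiemannInt_P22 pr Hw). pose (pr2 := RiemannInt_P23 pr Hw).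
        rewrite <- (RiemannInt_P26 pr1 pr2 pr).
        assert (RiemannInt pr1 <= exp lnM1 * pp (S N)) by (apply blockA; auto; lia || lra).
        assert (RiemannInt pr2 <= M0 * Ynorm P y + exp lnM1 * psum pp N) by (apply IHN; lra).
        lra.
Qed.

End Seq.

Lemma blockB n (pr : Riemann_integrable ff (tau n) (cc * tau n)) : (1 <= n)%nat ->
  exp lnm1 * (cc - 1) * (Bn n * Kfun P y (tau n)) <= RiemannInt pr.
Proof.
  intros Hn. pose proof (tau_pos n). pose proof cc_ge1.
  eapply Rle_trans. 2:{ apply int_ge_const with (M := exp lnm1 * Bn n * Kfun P y (tau n) / tau n).
    nra. intros t Ht. apply lower_pt; auto; lra. }
  right. field. lra.
Qed.

Lemma intB N (pr : Riemann_integrable ff (tau N) (cc * tau 1)) : (1 <= N)%nat ->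
  exp lnm1 * (cc - 1) * psum (fun n => Bn n * Kfun P y (tau n)) N <= RiemannInt pr.
Proof.
  revert pr. induction N; intros pr HN. lia.
  destruct N.
  - simpl psum. rewrite Rplus_0_l. apply blockB; auto.
  - pose proof cc_ge1. pose proof (tau_pos (S (S N))). pose proof (tau_pos (S N)).
    pose proof (cctau_S (S N) ltac:(lia)). pose proof (tau_le1 (S N) ltac:(lia)). pose proof cctau1.
    pose proof (tau_pos 1).
    assert (pr1 : Riemann_integrable ff (tau (S (S N))) (cc * tau (S (S N)))) by (apply ff_int; nra).
    assert (pr2 : Riemann_integrable ff (cc * tau (S (S N))) (tau (S N))) by (apply ff_int; nra).
    assert (pr3 : Riemann_integrable ff (tau (S N)) (cc * tau 1)) by (apply ff_int; nra).
    assert (pr12 : Riemann_integrable ff (tau (S (S N))) (tau (S N))) by (apply ff_int; nra).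
    rewrite <- (RiemannInt_P26 pr12 pr3 pr). rewrite <- (RiemannInt_P26 pr1 pr2 pr12).
    pose proof (IHN pr3 ltac:(lia)). pose proof (blockB (S (S N)) pr1 ltac:(lia)).
    assert (0 <= RiemannInt pr2).
    { replace 0 with (0 * (tau (S N) - cc * tau (S (S N)))) by ring.
      apply int_ge_const. auto. intros t Ht. apply ff_ge0. nra. }
    change (psum (fun n => Bn n * Kfun P y (tau n)) (S (S N))) with
      (psum (fun n => Bn n * Kfun P y (tau n)) (S N) + Bn (S (S N)) * Kfun P y (tau (S (S N)))).
    lra.
Qed.

End Fun.
End Par.

Lemma series_val_fin u s : series_val u = Fin s -> forall N, sum_f_R0 (fun k => u (S k)) N <= s.
Proof.
  unfold series_val, ER_sup. destruct (excluded_middle_informative _) as [Hb|Hb]; intros H N; [|discriminate].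
  injection H as <-. apply Rsup_ub; auto. exists N; auto.
Qed.

Lemma series_val_ge0 u s : (forall n, (1 <= n)%nat -> 0 <= u n) -> series_val u = Fin s -> 0 <= s.
Proof.
  intros Hu H. pose proof (series_val_fin u s H 0). simpl in H0. pose proof (Hu 1%nat (le_n 1)). lra.
Qed.

Lemma series_val_bound u D : (forall N, sum_f_R0 (fun k => u (S k)) N <= D) ->
  exists s, series_val u = Fin s /\ s <= D.
Proof.
  intros H. unfold series_val, ER_sup. destruct (excluded_middle_informative _) as [Hb|Hb].
  - eexists; split; [reflexivity|]. apply Rsup_lub. exists (sum_f_R0 (fun k => u (S k)) 0); exists 0%nat; auto.
    intros z [N ->]; auto.
  - exfalso; apply Hb. exists D. intros z [N ->]; auto.
Qed.

Lemma ER_sup_le (E : R -> Prop) D : (forall e, E e -> e <= D) -> (exists e, E e) -> ER_le (ER_sup E) (Fin D).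
Proof.
  intros H Hne. unfold ER_sup. destruct (excluded_middle_informative _) as [Hb|Hb].
  - simpl. apply Rsup_lub; auto.
  - exfalso; apply Hb. exists D. intros z Hz; auto.
Qed.

Lemma ER_sup_ge (E : R -> Prop) J e : ER_sup E = Fin J -> E e -> e <= J.
Proof.
  unfold ER_sup. destruct (excluded_middle_informative _) as [Hb|Hb]; intros H He; [|discriminate].
  injection H as <-. apply Rsup_ub; auto.
Qed.

Lemma psum_mono u N : (forall n, (1 <= n)%nat -> 0 <= u n) -> psum u N <= psum u (S N).
Proof. intros H. simpl. pose proof (H (S N) ltac:(lia)). lra. Qed.

Lemma psum_mono2 u N M : (forall n, (1 <= n)%nat -> 0 <= u n) -> (N <= M)%nat -> psum u N <= psum u M.
Proof. intros H HNM. induction HNM. lra. eapply Rle_trans. apply IHHNM. apply psum_mono; auto. Qed.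

Lemma psum_geom N : psum (fun n => (/ 2) ^ n) N = 1 - (/ 2) ^ N.
Proof. induction N. simpl. ring. change (psum (fun n => (/ 2) ^ n) (S N)) with (psum (fun n => (/ 2) ^ n) N + (/2)^(S N)).
  rewrite IHN. simpl. field. Qed.

Lemma psum_le u v N : (forall n, (1 <= n)%nat -> u n <= v n) -> psum u N <= psum v N.
Proof. intros H. induction N; simpl. lra. pose proof (H (S N) ltac:(lia)). lra. Qed.

Lemma psum_plus u v N : psum (fun n => u n + v n) N = psum u N + psum v N.
Proof. induction N; simpl. ring. rewrite IHN. ring. Qed.

Lemma psum_scal c u N : psum (fun n => c * u n) N = c * psum u N.
Proof. induction N; simpl. ring. rewrite IHN. ring. Qed.

Section Main.
Context (theta a : R) (m : nat) (Hth : 0 < theta) (Hm : (1 <= m)%nat) (Ha : 0 <= a).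

Local Notation tau' := (tau theta a m).
Local Notation ff' := (ff theta a m).
Local Notation pp' := (pp theta a m).
Local Notation M1 := (exp (lnM1 theta a m)).
Local Notation m1 := (exp (lnm1 theta a m)).
Local Notation c' := (cc theta m).
Local Notation M0' := (M0 theta a m).
Local Notation g' := (gam theta m).
Local Notation b' := (bb theta a m).

Lemma cc_gt1 : 1 < c'.
Proof. unfold cc. rewrite <- exp_0. apply exp_increasing. pose proof l2_pos. pose proof (LL_pos theta m Hth Hm).
  assert (0 < LL theta m * l2) by (apply Rmult_lt_0_compat; lra). lra. Qed.

Definition D1 := m1 * (c' - 1).
Lemma D1_pos : 0 < D1.
Proof. unfold D1. pose proof cc_gt1. apply Rmult_lt_0_compat. apply exp_pos. lra. Qed.

Definition CC := M0' + M1 + / D1.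
Lemma CC_pos : 0 < CC.
Proof. unfold CC. pose proof (M0_pos theta a m). pose proof (exp_pos (lnM1 theta a m)).
  pose proof D1_pos. pose proof (Rinv_0_lt_compat _ H1). lra. Qed.

Lemma tau_small u : 0 < u -> exists N, tau' (S N) <= u.
Proof.
  intros Hu. pose proof l2_pos. pose proof (LL_pos theta m Hth Hm).
  assert (HL : 0 < LL theta m * l2) by (apply Rmult_lt_0_compat; lra).
  destruct (INR_unbounded (- ln u / (LL theta m * l2))) as [N HN].
  exists N. unfold tau. rewrite <- (exp_ln u) by auto. apply exp_le.
  pose proof (ln_INR_ge0 (S N) ltac:(lia)).
  assert (0 <= a * ln (INR (S N))) by (apply Rmult_le_pos; lra).
  assert (- ln u < INR N * (LL theta m * l2)).
  { apply Rmult_lt_reg_r with (/ (LL theta m * l2)). apply Rinv_0_lt_compat; auto.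
    rewrite Rmult_assoc, Rinv_r by lra. rewrite Rmult_1_r. exact HN. }
  rewrite S_INR in *. nra.
Qed.

Section PY.
Context (P : NormedPair) (y : Ycar P).

Definition Eset := fun r => exists (u v : R) (pr : Riemann_integrable (Kintegrand P g' b' y) u v),
            0 < u /\ u <= v /\ v < 1 /\ r = RiemannInt pr.

Definition Fset := fun r => exists x : nat -> Ycar P,
  (forall n, (1 <= n)%nat -> Xmem P (x n)) /\ Fin r = pi_val P theta m a y x.

Lemma Fset_ge0 r : Fset r -> 0 <= r.
Proof.
  intros [x [Hx Hr]]. apply (series_val_ge0 (pp' P y x)). apply pp_ge0; auto.
  symmetry; exact Hr.
Qed.

Lemma Eset_bound e r : Eset e -> Fset r -> e <= M0' * Ynorm P y + M1 * r.
Proof.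
  intros [u [v [pr [Hu [Huv [Hv ->]]]]]] [x [Hx Hr]].
  destruct (tau_small u Hu) as [N HN].
  pose proof (intA theta a m Hth Hm Ha P y x Hx N u v pr HN Huv Hv) as HI. unfold ff in HI.
  pose proof (series_val_fin _ r (eq_sym Hr) N) as HS.
  rewrite <- psum_eq in HS. fold (pp theta a m P y x) in HS.
  pose proof (psum_mono (pp' P y x) N (pp_ge0 theta a m P y x Hx)).
  pose proof (exp_pos (lnM1 theta a m)).
  assert (M1 * psum (pp' P y x) N <= M1 * r) by (apply Rmult_le_compat_l; lra).
  lra.
Qed.

Lemma partA : ER_le (Knorm P g' b' y) (ER_scal CC (ER_plus (Fin (Ynorm P y)) (rho P theta m a y))).
Proof.
  unfold rho, ER_inf. destruct (excluded_middle_informative _) as [Hne|Hne].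
  2:{ simpl. destruct (Knorm P g' b' y); simpl; auto. }
  simpl. fold Fset in *. set (r := Rinf Fset).
  assert (Hr0 : 0 <= r) by (apply Rinf_glb; auto; apply Fset_ge0).
  unfold Knorm. fold Eset. apply ER_sup_le.
  - intros e He.
    assert (e <= M0' * Ynorm P y + M1 * r).
    { assert ((e - M0' * Ynorm P y) / M1 <= r).
      { apply Rinf_glb; auto. intros z Hz. pose proof (Eset_bound e z He Hz).
        pose proof (exp_pos (lnM1 theta a m)).
        apply Rmult_le_reg_r with M1; auto. unfold Rdiv. rewrite Rmult_assoc, Rinv_l by lra. lra. }
      pose proof (exp_pos (lnM1 theta a m)).
      apply Rmult_le_compat_r with (r := M1) in H; [|lra]. unfold Rdiv in H.
      rewrite Rmult_assoc, Rinv_l, Rmult_1_r in H by lra. lra. }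
    pose proof (M0_pos theta a m). pose proof (exp_pos (lnM1 theta a m)). pose proof D1_pos.
    pose proof (Rinv_0_lt_compat _ H2). pose proof (Ynorm_nonneg P y).
    unfold CC. nra.
  - exists (RiemannInt (ff_int theta a m P y (/2) (/2) ltac:(lra) ltac:(lra) ltac:(lra))).
    do 3 eexists. split; [|split; [|split]]; [| | |reflexivity]; lra.
Qed.

Lemma pp_eq (x : nat -> Ycar P) n :
  pp' P y x n = Bn theta a n * (Ynorm P (Ysub P y (x n)) + tau' n * Xnorm P (x n)).
Proof. unfold pp, pi_term. rewrite <- (Bn_eq theta a), <- (Bn_tau theta a m). ring. Qed.

Lemma partB : ER_le (ER_scal (/ CC) (rho P theta m a y)) (Knorm P g' b' y).
Proof.
  unfold Knorm. fold Eset.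
  destruct (ER_sup Eset) as [J|] eqn:HK.
  2:{ destruct (rho P theta m a y); simpl; auto. }
  set (BK := fun n => Bn theta a n * Kfun P y (tau' n)).
  assert (BK0 : forall n, (1 <= n)%nat -> 0 <= BK n).
  { intros n _. unfold BK. apply Rmult_le_pos. left; apply Bn_pos. apply K_ge0. left; apply tau_pos. }
  pose proof D1_pos as HD.
  assert (HBK : forall N, psum BK N <= J / D1).
  { intro N. apply Rle_trans with (psum BK (S N)). apply psum_mono; auto.
    pose proof (tau_pos theta a m (S N)).
    assert (tau' (S N) <= tau' 1) by (apply tau_le1; auto; lia).
    assert (c' * tau' 1 < 1) by (apply cctau1; auto).
    assert (1 <= c') by (apply cc_ge1; auto).
    pose proof (tau_pos theta a m 1).
    assert (pr : Riemann_integrable (ff' P y) (tau' (S N)) (c' * tau' 1)) by (apply ff_int; nra).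
    pose proof (intB theta a m Hth Hm Ha P y (S N) pr ltac:(lia)) as HB.
    assert (HE : RiemannInt pr <= J).
    { apply (ER_sup_ge Eset J); auto. exists (tau' (S N)), (c' * tau' 1), pr. split; [|split; [|split]]; auto; nra. }
    fold BK in HB. fold D1 in HB.
    apply Rmult_le_reg_l with D1; auto. unfold Rdiv. rewrite <- Rmult_assoc, (Rmult_comm D1 J), Rmult_assoc, Rinv_r, Rmult_1_r by lra.
    lra. }
  assert (Happrox : forall eps, 0 < eps -> exists s, Fset s /\ s <= J / D1 + eps).
  { intros eps He.
    assert (Hex : forall n, exists x, Xmem P x /\ Ynorm P (Ysub P y x) + tau' n * Xnorm P x <=
              Kfun P y (tau' n) + eps * (/ 2) ^ n / Bn theta a n).
    { intro n. apply K_approx. left; apply tau_pos.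
      unfold Rdiv. apply Rmult_lt_0_compat. apply Rmult_lt_0_compat; auto. apply pow_lt; lra.
      apply Rinv_0_lt_compat, Bn_pos. }
    set (x := fun n => proj1_sig (constructive_indefinite_description _ (Hex n))).
    assert (Hx : forall n, Xmem P (x n) /\ Ynorm P (Ysub P y (x n)) + tau' n * Xnorm P (x n) <=
              Kfun P y (tau' n) + eps * (/ 2) ^ n / Bn theta a n).
    { intro n. unfold x. exact (proj2_sig (constructive_indefinite_description _ (Hex n))). }
    destruct (series_val_bound (pp' P y x) (J / D1 + eps)) as [s [Hs1 Hs2]].
    { intro N. rewrite <- psum_eq.
      apply Rle_trans with (psum (fun n => BK n + eps * (/ 2) ^ n) (S N)).
      - apply psum_le. intros n _. rewrite pp_eq. destruct (Hx n) as [_ Hn].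
        pose proof (Bn_pos theta a n).
        apply Rle_trans with (Bn theta a n * (Kfun P y (tau' n) + eps * (/ 2) ^ n / Bn theta a n)).
        apply Rmult_le_compat_l; lra. unfold BK. right. field. lra.
      - rewrite psum_plus, psum_scal, psum_geom. pose proof (HBK (S N)).
        assert (0 < (/ 2) ^ (S N)) by (apply pow_lt; lra). nra. }
    exists s. split; auto. exists x. split. intros n _. apply Hx. symmetry; exact Hs1. }
  unfold rho, ER_inf. destruct (excluded_middle_informative _) as [Hne|Hne].
  2:{ exfalso. destruct (Happrox 1 ltac:(lra)) as [s [Hs _]]. apply Hne. exists s. exact Hs. }
  simpl. fold Fset.
  assert (Hr : Rinf Fset <= J / D1).
  { apply Rle_plus_epsilon. intros eps He. destruct (Happrox eps He) as [s [Hs1 Hs2]].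
    eapply Rle_trans. apply Rinf_lb. apply Fset_ge0. exact Hs1. exact Hs2. }
  assert (HJ : 0 <= J / D1) by (pose proof (HBK 0%nat); simpl in H; lra).
  assert (Hr0 : 0 <= Rinf Fset) by (apply Rinf_glb; auto; apply Fset_ge0).
  pose proof CC_pos.
  assert (HC : / CC <= D1).
  { rewrite <- (Rinv_inv D1). apply Rinv_le_contravar. apply Rinv_0_lt_compat; auto.
    unfold CC. pose proof (M0_pos theta a m). pose proof (exp_pos (lnM1 theta a m)). lra. }
  apply Rle_trans with (D1 * (J / D1)).
  - apply Rmult_le_compat; auto. left; apply Rinv_0_lt_compat; auto.
  - right. field. lra.
Qed.

End PY.
End Main.

Theorem mainTheorem14 :
  forall (theta : R) (m : nat) (a : R),
    0 < theta -> (1 <= m)%nat -> 0 <= a ->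
    let gamma := theta / (2 * INR m + theta) in
    let b := 2 * INR m * a / (2 * INR m + theta) in
    (forall (P : NormedPair) (y : Ycar P),
        Sspace P theta m a y <-> Kspace P gamma b y) /\
    exists C : R, 0 < C /\
      forall (P : NormedPair) (y : Ycar P),
        ER_le (ER_scal (/ C) (rho P theta m a y)) (Knorm P gamma b y) /\
        ER_le (Knorm P gamma b y)
              (ER_scal C (ER_plus (Fin (Ynorm P y)) (rho P theta m a y))).
Proof.
  intros theta m a Hth Hm Ha gamma b.
  change gamma with (gam theta m). change b with (bb theta a m).
  assert (HA : forall P y, ER_le (Knorm P (gam theta m) (bb theta a m) y)
     (ER_scal (CC theta a m) (ER_plus (Fin (Ynorm P y)) (rho P theta m a y)))).
  { intros P y. apply partA; auto. }
  assert (HB : forall P y, ER_le (ER_scal (/ CC theta a m) (rho P theta m a y))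
     (Knorm P (gam theta m) (bb theta a m) y)).
  { intros P y. apply partB; auto. }
  split.
  - intros P y. unfold Sspace, Kspace. split; intros H HK.
    + specialize (HA P y). rewrite HK in HA. destruct (rho P theta m a y); simpl in HA; auto.
    + specialize (HB P y). rewrite HK in HB. destruct (Knorm P (gam theta m) (bb theta a m) y); simpl in HB; auto.
  - exists (CC theta a m). split. apply CC_pos; auto. intros P y; split; auto.
Qed.
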